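(* Let $A$ and $B$ be disjoint finite alphabets, and let $\rho_A$ and $\rho_B$ be equivalence relations on $A^*$ and $B^*$ respectively, each having infinitely many equivalence classes. Then the language $L(\rho_A,\rho_B)=\{u_1v_1u_2v_2 : (u_1,u_2)\in\rho_A,\ (v_1,v_2)\in\rho_B\}$ (where $u_1,u_2\in A^*$ and $v_1,v_2\in B^*$) is not context-free. *)

(* Defs.v *)
From Stdlib Require List.
From mathcomp Require Import all_boot.
Set Implicit Arguments. Unset Strict Implicit. Unset Printing Implicit Defensive.

(* Nonterminals are
   natural numbers; a grammar has a start symbol and a finite list of
   productions X -> rhs, rhs a word over nonterminals + terminals. *)
Record cfg (T : Type) := CFG {
  cfg_start : nat;
  cfg_rules : list (nat * list (nat + T))
}.

Inductive derives (T : Type) (G : cfg T) : nat -> seq T -> Prop :=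
| der_rule X rhs w :
    List.In (X, rhs) (cfg_rules G) -> derives_seq G rhs w -> derives G X w
with derives_seq (T : Type) (G : cfg T) : seq (nat + T) -> seq T -> Prop :=
| ds_nil : derives_seq G [::] [::]
| ds_term t r w : derives_seq G r w -> derives_seq G (inr t :: r) (t :: w)
| ds_nt X r u w : derives G X u -> derives_seq G r w ->
    derives_seq G (inl X :: r) (u ++ w).

Definition cfg_lang (T : Type) (G : cfg T) (w : seq T) : Prop :=
  derives G (cfg_start G) w.

Definition context_free (T : Type) (L : seq T -> Prop) : Prop :=
  exists G : cfg T, forall w, L w <-> cfg_lang G w.

Definition prop_equivalence (X : Type) (r : X -> X -> Prop) : Prop :=
  (forall x, r x x) /\ (forall x y, r x y -> r y x) /\
  (forall x y z, r x y -> r y z -> r x z).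

Definition infinitely_many_classes (X : Type) (r : X -> X -> Prop) : Prop :=
  ~ exists s : list X, forall x, exists2 y, List.In y s & r x y.

(* L(rhoA, rhoB) over the disjoint union alphabet A + B. *)
Definition L_rho (A B : Type) (rA : seq A -> seq A -> Prop)
    (rB : seq B -> seq B -> Prop) (w : seq (A + B)) : Prop :=
  exists u1 u2 v1 v2, rA u1 u2 /\ rB v1 v2 /\
    w = map inl u1 ++ map inr v1 ++ map inl u2 ++ map inr v2.

(* Main.v *)
Require Import Defs.
From mathcomp Require Import all_boot zify.
From Stdlib Require Classical_Prop.
Set Implicit Arguments. Unset Strict Implicit. Unset Printing Implicit Defensive.

Inductive D (T : Type) (G : cfg T) : nat -> nat -> seq T -> Prop :=
| Dr n X rhs w : List.In (X, rhs) (cfg_rules G) -> DS G n rhs w -> D G n.+1 X w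
with DS (T : Type) (G : cfg T) : nat -> seq (nat + T) -> seq T -> Prop :=
| DSnil : DS G 0 [::] [::]
| DSt n t r w : DS G n r w -> DS G n (inr t :: r) (t :: w)
| DSnt n1 n2 X r u w : D G n1 X u -> DS G n2 r w -> DS G (n1 + n2) (inl X :: r) (u ++ w).

Scheme D_ind2 := Induction for D Sort Prop
  with DS_ind2 := Induction for DS Sort Prop.
Scheme der_ind2 := Induction for derives Sort Prop
  with ders_ind2 := Induction for derives_seq Sort Prop.

Lemma der_D T (G : cfg T) X w : derives G X w -> exists n, D G n X w.
Proof.
move=> H.
apply: (@der_ind2 T G (fun X w _ => exists n, D G n X w)
                 (fun r w _ => exists n, DS G n r w)) H.
- move=> X0 rhs w0 Hin _ [n Hn]; exists n.+1; exact: Dr Hin Hn.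
- by exists 0; constructor.
- move=> t r w0 _ [n Hn]; exists n; exact: DSt.
- move=> X0 r u w0 _ [n1 H1] _ [n2 H2]; exists (n1 + n2); exact: DSnt.
Qed.

Lemma D_der T (G : cfg T) n X w : D G n X w -> derives G X w.
Proof.
move=> H.
apply: (@D_ind2 T G (fun n X w _ => derives G X w)
                 (fun n r w _ => derives_seq G r w)) H.
- move=> n0 X0 rhs w0 Hin _ H; exact: der_rule Hin H.
- constructor.
- move=> n0 t r w0 _ H; exact: ds_term.
- move=> n1 n2 X0 r u w0 _ H1 _ H2; exact: ds_nt.
Qed.

Definition Pump T (G : cfg T) K X w n := exists u v x y z n',
  w = u ++ v ++ x ++ y ++ z /\ size (v ++ x ++ y) <= K /\ n' < n /\ D G n' X (u ++ x ++ z).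
Definition PumpS T (G : cfg T) K r w n := exists u v x y z n',
  w = u ++ v ++ x ++ y ++ z /\ size (v ++ x ++ y) <= K /\ n' < n /\ DS G n' r (u ++ x ++ z).
Definition Occ T (G : cfg T) Y (w : seq T) n := exists u x z n1,
  n1 <= n /\ w = u ++ x ++ z /\ D G n1 Y x.

Lemma uniq_bound (S : seq nat) N : uniq S -> all (fun Y => Y < N) S -> size S <= N.
Proof.
move=> U A; rewrite -(size_iota 0 N); apply: uniq_leq_size U _.
by move=> y Hy; rewrite mem_iota /=; move/allP: A => /(_ y Hy).
Qed.

Lemma R_D T (G : cfg T) N m :
  0 < m ->
  (forall X rhs, List.In (X, rhs) (cfg_rules G) -> X < N /\ size rhs <= m) ->
  forall n X w, D G n X w ->
  Pump G (m ^ N.+1) X w n \/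
  exists S, uniq S /\ all (fun Y => Y < N) S /\ size w <= m ^ size S /\
            forall Y, Y \in S -> Occ G Y w n.
Proof.
move=> m0 HG n X w H.
apply: (@D_ind2 T G (fun n X w _ => Pump G (m ^ N.+1) X w n \/
  exists S, uniq S /\ all (fun Y => Y < N) S /\ size w <= m ^ size S /\
            forall Y, Y \in S -> Occ G Y w n)
  (fun n r w _ => PumpS G (m ^ N.+1) r w n \/
  exists S, uniq S /\ all (fun Y => Y < N) S /\ size w <= size r * m ^ size S /\
            forall Y, Y \in S -> Occ G Y w n)) H.
- move=> n0 X0 rhs w0 Hin HDS [[u [v [x [y [z [n' [E [Sz [Lt HD]]]]]]]]]|[S [U [Al [Sz Oc]]]]].
  + left; exists u, v, x, y, z, n'.+1; split=> //; split=> //; split=> //.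
    exact: Dr Hin HD.
  + have [XN Srhs] := HG _ _ Hin.
    have SzN := uniq_bound U Al.
    case XS: (X0 \in S).
    * left; have [u [x [z [n1 [Le [E HD]]]]]] := Oc _ XS.
      exists [::], u, x, z, [::], n1; split; first by rewrite E /= cats0.
      split; last by split=> //; rewrite /= cats0.
      rewrite -E; apply: (leq_trans Sz).
      rewrite expnS; apply: leq_mul => //; exact: leq_pexp2l.
    * right; exists (X0 :: S); split; first by rewrite /= XS U.
      split; first by rewrite /= XN Al.
      split.
        rewrite /= expnS; apply: (leq_trans Sz); exact: leq_mul.
      move=> Y; rewrite inE => /orP [/eqP ->|YS].
        exists [::], w0, [::], n0.+1; split=> //; split; first by rewrite cats0.
        exact: Dr Hin HDS.
      have [u [x [z [n1 [Le [E HD]]]]]] := Oc _ YS.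
      exists u, x, z, n1; split=> //; exact: leqW.
- right; exists [::]; split=> //.
- move=> n0 t r w0 _ [[u [v [x [y [z [n' [E [Sz [Lt HD]]]]]]]]]|[S [U [Al [Sz Oc]]]]].
  + left; exists (t :: u), v, x, y, z, n'; split; first by rewrite E.
    split=> //; split=> //; exact: DSt.
  + right; exists S; split=> //; split=> //; split.
      rewrite /= mulSn; have := expn_gt0 m (size S); rewrite m0 /=; move: Sz; move: (m ^ size S) => e; lia.
    move=> Y YS; have [u [x [z [n1 [Le [E HD]]]]]] := Oc _ YS.
    by exists (t :: u), x, z, n1; rewrite E.
- move=> n1 n2 X0 r u w0 HD1 IH1 HDS IH2.
  case: IH1 => [[a [v [x [y [b [n' [E [Sz [Lt HD]]]]]]]]]|[S1 [U1 [Al1 [Sz1 Oc1]]]]].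
    left; exists a, v, x, y, (b ++ w0), (n' + n2); split; first by rewrite E -!catA.
    split=> //; split; first by rewrite ltn_add2r.
    have := DSnt HD HDS; by rewrite -!catA.
  case: IH2 => [[a [v [x [y [b [n' [E [Sz [Lt HD]]]]]]]]]|[S2 [U2 [Al2 [Sz2 Oc2]]]]].
    left; exists (u ++ a), v, x, y, b, (n1 + n'); split; first by rewrite E -!catA.
    split=> //; split; first by rewrite ltn_add2l.
    have := DSnt HD1 HD; by rewrite -!catA.
  have Occ1 : forall Y, Y \in S1 -> Occ G Y (u ++ w0) (n1 + n2).
    move=> Y YS; have [p [x [q [k [Le [E HD]]]]]] := Oc1 _ YS.
    exists p, x, (q ++ w0), k; split; first by apply: (leq_trans Le); exact: leq_addr.
    by rewrite E -!catA.
  have Occ2 : forall Y, Y \in S2 -> Occ G Y (u ++ w0) (n1 + n2).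
    move=> Y YS; have [p [x [q [k [Le [E HD]]]]]] := Oc2 _ YS.
    exists (u ++ p), x, q, k; split; first by apply: (leq_trans Le); exact: leq_addl.
    by rewrite E -!catA.
  right; case: (leqP (size S1) (size S2)) => Hle.
  + exists S2; split=> //; split=> //; split=> //.
    rewrite size_cat /= mulSn; move: Sz1 Sz2 (leq_pexp2l m0 Hle).
    move: (m ^ size S1) (m ^ size S2) => e1 e2; lia.
  + exists S1; split=> //; split=> //; split; last by move=> Y /Occ1.
    rewrite size_cat /= mulSn; move: Sz1 Sz2 (leq_pexp2l m0 (ltnW Hle)).
    move: (leq_mul (leqnn (size r)) (leq_pexp2l m0 (ltnW Hle))).
    move: (m ^ size S1) (m ^ size S2) => e1 e2; move: (size r) => k; nia.
Qed.

Lemma pump_main T (G : cfg T) N m :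
  0 < m ->
  (forall X rhs, List.In (X, rhs) (cfg_rules G) -> X < N /\ size rhs <= m) ->
  forall n X w, D G n X w -> m ^ N.+1 < size w ->
  exists u v x y z, w = u ++ v ++ x ++ y ++ z /\ size (v ++ x ++ y) <= m ^ N.+1 /\
    0 < size (v ++ y) /\ derives G X (u ++ x ++ z).
Proof.
move=> m0 HG n; elim: n {-2}n (leqnn n) => [|k IH] n Hn X w HD Hw.
- by case: HD Hn.
- case: (R_D m0 HG HD) => [[u [v [x [y [z [n' [E [Sz [Lt HD']]]]]]]]]|[S [U [Al [Sz _]]]]].
  + case vy: (size (v ++ y)) => [|j].
      have v0 : v = [::] by apply: size0nil; move: vy; rewrite size_cat; lia.
      have y0 : y = [::] by apply: size0nil; move: vy; rewrite size_cat; lia.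
      rewrite v0 y0 /= in E.
      apply: (IH n') => //; first by rewrite -ltnS; exact: (leq_trans Lt).
      by rewrite E.
    exists u, v, x, y, z; split=> //; split=> //; split; first by rewrite vy.
    exact: D_der HD'.
  + have := uniq_bound U Al => SN.
    move: (leq_pexp2l m0 (leqW SN)) Sz Hw; move: (m ^ size S) (m ^ N.+1) => e1 e2; lia.
Qed.

Fixpoint bnd T (l : list (nat * list (nat + T))) : nat :=
  match l with
  | nil => 0
  | cons r l => maxn (maxn r.1.+1 (size r.2)) (bnd l)
  end.

Lemma bndP T (l : list (nat * list (nat + T))) X rhs :
  List.In (X, rhs) l -> X < bnd l /\ size rhs <= bnd l.
Proof.
elim: l => [//|[Y r] l IH] /= [[-> ->]|H].
- by rewrite /= !leq_max ltnSn leqnn /= !orbT.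
- have [H1 H2] := IH H; split; [apply: (leq_trans H1) | apply: (leq_trans H2)]; by rewrite leq_max leqnn orbT.
Qed.

Definition notl A B (s : seq (A + B)) := if s is inl _ :: _ then false else true.
Definition notr A B (s : seq (A + B)) := if s is inr _ :: _ then false else true.

Lemma split_l A B (p p' : seq A) (s s' : seq (A + B)) :
  map inl p ++ s = map inl p' ++ s' -> notl s -> notl s' -> p = p' /\ s = s'.
Proof.
elim: p p' => [|a p IH] [|a' p'] //=.
- by move=> -> /=.
- by move=> <-.
- by case=> -> /IH H /H H' /H' [-> ->].
Qed.

Lemma split_r A B (p p' : seq B) (s s' : seq (A + B)) :
  map inr p ++ s = map inr p' ++ s' -> notr s -> notr s' -> p = p' /\ s = s'.
Proof.
elim: p p' => [|a p IH] [|a' p'] //=.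
- by move=> -> /=.
- by move=> <-.
- by case=> -> /IH H /H H' /H' [-> ->].
Qed.

Lemma inr_noinl A B (q : seq B) (s1 s2 : seq (A + B)) x :
  map inr q = s1 ++ inl x :: s2 -> False.
Proof. by elim: s1 q => [|e s1 IH] [|b q] //= [_ /IH]. Qed.

Lemma notl_inr A B (q : seq B) : notl (map (@inr A B) q).
Proof. by case: q. Qed.

Lemma notl_inr_cat A B (q : seq B) (s : seq (A + B)) : 0 < size q -> notl (map inr q ++ s).
Proof. by case: q. Qed.

Lemma notr_inl_cat A B (p : seq A) (s : seq (A + B)) : 0 < size p -> notr (map inl p ++ s).
Proof. by case: p. Qed.

Lemma inr_noinl2 A B (q : seq B) (p : seq A) (s1 s2 : seq (A + B)) :
  0 < size p -> map inr q = s1 ++ map inl p ++ s2 -> False.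
Proof. case: p => // a p _; exact: inr_noinl. Qed.

Lemma uniq4 A B (a1 a2 a' a : seq A) (b1 b2 b' b : seq B) :
  0 < size a' -> 0 < size b' -> 0 < size a -> 0 < size b ->
  map inl a1 ++ map inr b1 ++ map inl a2 ++ map inr b2 =
  map inl a' ++ map inr b' ++ map inl a ++ map inr b :> seq (A + B) ->
  [/\ a1 = a', b1 = b', a2 = a & b2 = b].
Proof.
move=> ha' hb' ha hb.
case: b1 => [|z b1].
  rewrite /= catA -map_cat => E.
  have [_ E2] := split_l E (notl_inr _ _) (notl_inr_cat _ hb').
  by have := inr_noinl2 ha E2.
move=> E; have [E1 E2] := split_l E erefl (notl_inr_cat _ hb').
move: E; case: a2 E2 => [|z2 a2] E2 E.
  rewrite /= -map_cat in E2.
  by have := inr_noinl2 (q := z :: (b1 ++ b2)) ha E2.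
have [E3 E4] := split_r E2 erefl (notr_inl_cat _ ha).
have [E5 E6] := split_l E4 (notl_inr _ _) (notl_inr _ _).
split=> //; apply: (inj_map (f := @inr A B)) => //; by move=> ? ? [].
Qed.

Lemma cat_split X (s1 s2 t1 t2 : seq X) :
  s1 ++ s2 = t1 ++ t2 -> size t1 <= size s1 -> exists m, s1 = t1 ++ m /\ t2 = m ++ s2.
Proof.
elim: t1 s1 => [|e t1 IH] s1 /=; first by move=> E _; exists s1; rewrite E.
case: s1 => [|e' s1] //= [-> /IH H] /H [m [-> ->]]; by exists m.
Qed.

Definition isl A B (e : A + B) := if e is inl _ then true else false.

Lemma all_isl A B (s : seq (A + B)) : all (@isl A B) s -> exists p, s = map inl p.
Proof.
elim: s => [|[a|b] s IH] /=; first by exists [::].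
  by move=> /IH [p ->]; exists (a :: p).
done.
Qed.

Lemma all_isr A B (s : seq (A + B)) : all (predC (@isl A B)) s -> exists p, s = map inr p.
Proof.
elim: s => [|[a|b] s IH] /=; first by exists [::].
  done.
by move=> /IH [p ->]; exists (b :: p).
Qed.

Lemma all_isl2 A B (s : seq (A + B)) : all (predC (predC (@isl A B))) s -> all (@isl A B) s.
Proof. by apply: sub_all => e /= /negPn. Qed.

Lemma del_window (X : eqType) (f : pred X) (W1 W2 u v x y z : seq X) :
  all f W1 -> all (predC f) W2 -> W1 ++ W2 = u ++ v ++ x ++ y ++ z ->
  size (v ++ x ++ y) < size W1 -> size (v ++ x ++ y) < size W2 ->
  exists s1 s2, u ++ x ++ z = s1 ++ s2 /\ all f s1 /\ all (predC f) s2 /\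
    0 < size s1 /\ 0 < size s2 /\ size s1 + size s2 + size (v ++ y) = size W1 + size W2.
Proof.
move=> A1 A2 E L1 L2.
have sub : subseq (u ++ x ++ z) (W1 ++ W2).
  rewrite E; apply: cat_subseq; first exact: subseq_refl.
  have -> : x ++ z = [::] ++ (x ++ z) by [].
  apply: cat_subseq; first exact: sub0seq.
  apply: cat_subseq; first exact: subseq_refl.
  exact: suffix_subseq.
case/subseqP: sub => ms Hms Es.
rewrite -(cat_take_drop (size W1) ms) mask_cat in Es; last first.
  rewrite size_take Hms size_cat; case: ltnP => //; lia.
set s1 := mask _ W1 in Es; set s2 := mask _ W2 in Es.
have B1 : all f s1 by exact: all_mask.
have B2 : all (predC f) s2 by exact: all_mask.
exists s1, s2; split=> //; split=> //; split=> //.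
have cW := congr1 (count f) E; have cW' := congr1 (count (predC f)) E.
have sW := congr1 size E.
have cs := congr1 (count f) Es; have cs' := congr1 (count (predC f)) Es.
have ss := congr1 size Es.
move: (count_predC f s1) (count_predC f s2) (count_predC f W1) (count_predC f W2)
  (count_predC f v) (count_predC f y).
move: A1 A2 B1 B2; rewrite !all_count => /eqP a1 /eqP a2 /eqP b1 /eqP b2.
rewrite !count_cat !size_cat in cW cW' sW cs cs' ss L1 L2 *.
lia.
Qed.

Fixpoint wl (X : finType) (n : nat) : seq (seq X) :=
  if n is n'.+1 then [::] :: [seq e :: s | e <- enum X, s <- wl X n'] else [:: [::]].

Lemma wlP (X : finType) n (s : seq X) : size s <= n -> s \in wl X n.
Proof.
elim: n s => [|n IH] [|e s] //= H.
rewrite inE; apply/orP; right; apply: allpairs_f; first by rewrite mem_enum.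
exact: IH.
Qed.

Lemma In_mem (X : eqType) (y : X) s : y \in s -> List.In y s.
Proof.
elim: s => [//|e s IH]; rewrite inE => /orP [/eqP ->|H]; [by left | right; exact: IH].
Qed.

Lemma min_nat (P : nat -> Prop) k : P k -> exists j, P j /\ forall i, P i -> j <= i.
Proof.
elim: k {-2}k (leqnn k) => [|k IH] j Hj Pj.
  exists j; split=> // i _; move: Hj; rewrite leqn0 => /eqP ->; done.
case: (Classical_Prop.classic (exists i, i < j /\ P i)) => [[i [Hi Pi]]|H].
  apply: (IH i) => //; rewrite -ltnS; exact: leq_trans Hi Hj.
exists j; split=> // i Pi; rewrite leqNgt; apply/negP => Hi; apply: H; by exists i.
Qed.

Lemma pick_min (X : finType) (rho : seq X -> seq X -> Prop) :
  prop_equivalence rho -> infinitely_many_classes rho -> forall K,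
  exists a, K < size a /\ forall y, rho a y -> size a <= size y.
Proof.
move=> [r [s t]] inf K.
have [a0 Ha0] : exists a0, forall y, rho a0 y -> K < size y.
  apply: Classical_Prop.NNPP => H; apply: inf; exists (wl X K) => x.
  apply: Classical_Prop.NNPP => H2; apply: H; exists x => y Hy.
  rewrite ltnNge; apply/negP => Hs; apply: H2; exists y => //.
  apply: In_mem; exact: wlP.
have [j [[a [Ha Hs]] Hmin]] := min_nat (P := fun k => exists y, rho a0 y /\ size y = k)
  (ex_intro _ a0 (conj (r a0) erefl)).
exists a; split; first exact: Ha0.
move=> y Hy; rewrite Hs; apply: Hmin; exists y; split=> //; exact: t Ha Hy.
Qed.

Theorem mainTheorem5 (A B : finType)
    (rhoA : seq A -> seq A -> Prop) (rhoB : seq B -> seq B -> Prop) :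
  prop_equivalence rhoA -> prop_equivalence rhoB ->
  infinitely_many_classes rhoA -> infinitely_many_classes rhoB ->
  ~ context_free (L_rho rhoA rhoB).
Proof.
move=> eA eB infA infB [G HG].
have [rA [sA tA]] := eA; have [rB [sB tB]] := eB.
set K := (bnd (cfg_rules G)).+1.
have K0 : 0 < K by [].
have HGb : forall X rhs, List.In (X, rhs) (cfg_rules G) -> X < K /\ size rhs <= K.
  move=> X rhs Hin; have [h1 h2] := bndP Hin; split; [exact: ltnW | exact: leqW].
set M := K ^ K.+1.
have [a [Ma minA]] := pick_min eA infA M.
have [b [Mb minB]] := pick_min eB infB M.
set W1 := map (@inl A B) a; set W2 := map (@inr A B) b.
have Lw : L_rho rhoA rhoB (W1 ++ W2 ++ W1 ++ W2).
  by exists a, a, b, b.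
have [n Dn] := der_D ((HG _).1 Lw).
have sW1 : size W1 = size a by rewrite size_map.
have sW2 : size W2 = size b by rewrite size_map.
have Mw : M < size (W1 ++ W2 ++ W1 ++ W2) by rewrite !size_cat; lia.
have [u [v [x [y [z [E [Sz [Pos Dr']]]]]]]] := pump_main K0 HGb Dn Mw.
have [a1 [a2 [b1 [b2 [Ha [Hb Et]]]]]] := (HG _).2 Dr'.
rewrite -/M in Sz; clearbody M.
have aW1 : all (@isl A B) W1 by rewrite all_map; apply/allP.
have aW2 : all (predC (@isl A B)) W2 by rewrite all_map; apply/allP.
have aW1' : all (predC (predC (@isl A B))) W1 by rewrite all_map; apply/allP.
have pa : 0 < size a by lia.
have pb : 0 < size b by lia.
have svy : size (v ++ y) <= size (v ++ x ++ y) by rewrite !size_cat; lia.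
have l1 : size (v ++ x ++ y) < size W1 by rewrite sW1; exact: leq_ltn_trans Sz Ma.
have l2 : size (v ++ x ++ y) < size W2 by rewrite sW2; exact: leq_ltn_trans Sz Mb.
case: (leqP (size (u ++ v ++ x ++ y)) (size (W1 ++ W2))) => H1.
  (* window inside the first two blocks *)
  have E' : (W1 ++ W2) ++ (W1 ++ W2) = (u ++ v ++ x ++ y) ++ z by rewrite -!catA.
  have [mm [Em Ez]] := cat_split E' H1.
  have Em' : W1 ++ W2 = u ++ v ++ x ++ y ++ mm by rewrite Em -!catA.
  have [s1 [s2 [Es [A1 [A2 [p1 [p2 Sz']]]]]]] :=
    del_window aW1 aW2 Em' l1 l2.
  have [a' Ea'] := all_isl A1; have [b' Eb'] := all_isr A2.
  have Et2 : u ++ x ++ z = map inl a' ++ map inr b' ++ map inl a ++ map inr b.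
    rewrite Ez; have -> : u ++ x ++ mm ++ (W1 ++ W2) = (u ++ x ++ mm) ++ (W1 ++ W2) by rewrite -!catA.
    by rewrite Es Ea' Eb' -!catA.
  rewrite Et2 in Et.
  have q1 : 0 < size a' by rewrite -(size_map (@inl A B)) -Ea'.
  have q2 : 0 < size b' by rewrite -(size_map (@inr A B)) -Eb'.
  have [e1 e2 e3 e4] := uniq4 q1 q2 pa pb (esym Et); rewrite e1 e2 e3 e4 in Ha Hb.
  have h1 := minA _ (sA _ _ Ha); have h2 := minB _ (sB _ _ Hb).
  rewrite Ea' Eb' !size_map ?sW1 ?sW2 in Sz'.
  have : @size A a' + @size B b' + size (v ++ y) = size a + size b := Sz'. lia.
case: (leqP (size (W1 ++ W2)) (size u)) => H3.
  (* window inside the last two blocks *)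
  have E' : u ++ (v ++ x ++ y ++ z) = (W1 ++ W2) ++ (W1 ++ W2) by rewrite -!catA.
  have [mm [Em Ez]] := cat_split E' H3.
  have [s1 [s2 [Es [A1 [A2 [p1 [p2 Sz']]]]]]] :=
    del_window aW1 aW2 Ez l1 l2.
  have [a' Ea'] := all_isl A1; have [b' Eb'] := all_isr A2.
  have Et2 : u ++ x ++ z = map inl a ++ map inr b ++ map inl a' ++ map inr b'.
    rewrite Em -catA Es Ea' Eb' -!catA //.
  rewrite Et2 in Et.
  have q1 : 0 < size a' by rewrite -(size_map (@inl A B)) -Ea'.
  have q2 : 0 < size b' by rewrite -(size_map (@inr A B)) -Eb'.
  have [e1 e2 e3 e4] := uniq4 pa pb q1 q2 (esym Et); rewrite e1 e2 e3 e4 in Ha Hb.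
  have h1 := minA _ Ha; have h2 := minB _ Hb.
  rewrite Ea' Eb' !size_map ?sW1 ?sW2 in Sz'.
  have : @size A a' + @size B b' + size (v ++ y) = size a + size b := Sz'. lia.
(* window across the middle *)
have h1 : size W1 <= size u by rewrite !size_cat in H1 H3 Sz *; lia.
have E' : u ++ (v ++ x ++ y ++ z) = W1 ++ (W2 ++ W1 ++ W2) by [].
have [m1 [Em1 Ez1]] := cat_split E' h1.
have h2 : size (m1 ++ v ++ x ++ y) <= size (W2 ++ W1).
  have := congr1 size Em1; rewrite !size_cat in H1 H3 Sz * => Hs; lia.
have E'' : (W2 ++ W1) ++ W2 = (m1 ++ v ++ x ++ y) ++ z by rewrite -!catA.
have [m2 [Em2 Ez2]] := cat_split E'' h2.
have Em2' : W2 ++ W1 = m1 ++ v ++ x ++ y ++ m2 by rewrite Em2 -!catA.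
have [s1 [s2 [Es [A1 [A2 [p1 [p2 Sz']]]]]]] :=
  del_window aW2 aW1' Em2' l2 l1.
have [b' Eb'] := all_isr A1; have [a' Ea'] := all_isl (all_isl2 A2).
have Et2 : u ++ x ++ z = map inl a ++ map inr b' ++ map inl a' ++ map inr b.
  rewrite Em1 Ez2; have -> : (W1 ++ m1) ++ x ++ m2 ++ W2 = W1 ++ (m1 ++ x ++ m2) ++ W2 by rewrite -!catA.
  by rewrite Es Ea' Eb' -!catA.
rewrite Et2 in Et.
have q1 : 0 < size a' by rewrite -(size_map (@inl A B)) -Ea'.
have q2 : 0 < size b' by rewrite -(size_map (@inr A B)) -Eb'.
have [e1 e2 e3 e4] := uniq4 pa q2 q1 pb (esym Et); rewrite e1 e2 e3 e4 in Ha Hb.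
have h3 := minA _ Ha; have h4 := minB _ (sB _ _ Hb).
rewrite Ea' Eb' !size_map ?sW1 ?sW2 in Sz'.
  have : @size B b' + @size A a' + size (v ++ y) = size b + size a := Sz'. lia.
Qed.
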